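(* Let $F$ be a Ferrers diagram, $T\in\mathsf{EWtab}(F)$ and $S$ the supplementary tableau to $T$. Let $j\in\mathsf{rows}(F)$ and $k\in\mathsf{cols}(F)$ with $j>k$. Then $S_{jk}=0$ if and only if there exists $k'\in\mathsf{cols}(F)$ with $k'>j$ such that $T_{jk'}=0$ and, for all $j'\in\mathsf{rows}(F)$ with $j'<k$, if $T_{j'k'}=0$ then $T_{j'k}=0$. Otherwise $S_{jk}=1$.
   Context: Ferrers diagrams and graphs: a Ferrers diagram $F$ (English convention) of semiperimeter $n+1$ has rows and columns labeled by $0,\ldots,n$: the $n+1$ unit steps of its south-east boundary path, traversed from top-right to bottom-left, are labeled $0,\ldots,n$; a vertical step labels the row it bounds, a horizontal step the column it bounds (top row labeled $0$). $\mathsf{rows}(F)$, $\mathsf{cols}(F)$ are the label sets; $F$ has a cell in row $i$, column $j$ iff $i<j$. $G(F)$ has vertex set $\{0,\ldots,n\}$ with edges $\{i,j\}$ for $i\in\mathsf{rows}(F)$, $j\in\mathsf{cols}(F)$, $i<j$. Sandpile model on $G(F)$ with sink $0$: configurations $c\in\mathbb{N}^n$; non-sink $v$ unstable if $c_v\ge\deg(v)$; toppling sends one grain to each neighbour (grains to $0$ disappear); toppling the sink adds one grain to each neighbour of $0$. Canonical toppling of a recurrent configuration $c$: topple the sink ($U^{(0)}_c=\{0\}$), then alternately topple simultaneously all unstable vertices in $\mathsf{cols}(F)$ ($V^{(1)}_c$), all unstable in $\mathsf{rows}(F)$ ($U^{(1)}_c$), etc.; $\mathsf{CanonTop}(c)=(U^{(0)}_c,V^{(1)}_c,U^{(1)}_c,\ldots)$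 is an ordered partition of $\{0,\ldots,n\}$. EW-tableaux: $0/1$-fillings $T$ of $F$ ($T_{ij}$ = entry in row $i$, column $j$) with top row all 1s, a 0 in every other row, and no rectangle with 0s in two diagonally opposite corners and 1s in the other two; $\mathsf{EWtab}(F)$ is their set. $\phi_{TC}(T)$ is the (recurrent) configuration with $c_i$ = number of 1s in row $i$ ($i\in\mathsf{rows}(F)$), $c_i$ = number of 0s in column $i$ ($i\in\mathsf{cols}(F)$). $\mathsf{CanonTop}(T):=\mathsf{CanonTop}(\phi_{TC}(T))$. Supplementary tableau $S=S(T)$: the rectangular $|\mathsf{rows}(F)|\times|\mathsf{cols}(F)|$ array with $S_{ij}=1$ if row label $i$ lies in an earlier block of $\mathsf{CanonTop}(T)$ than column label $j$, and $S_{ij}=0$ otherwise. *)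

(* Defs.v *)
From mathcomp Require Import all_boot.
Set Implicit Arguments. Unset Strict Implicit. Unset Printing Implicit Defensive.

(* A Ferrers diagram of semiperimeter n+1 is encoded by the set R of row
   labels among {0,...,n} (= 'I_n.+1); the column labels are the others.
   Being a genuine Ferrers diagram means 0 \in R and n \notin R
   (hypotheses of the theorem). *)

Section Ferrers.
Variable n : nat.
Variable R : {set 'I_n.+1}.

Definition is_cell (i j : 'I_n.+1) : bool := [&& i \in R, j \notin R & i < j].

Definition ferrers_adj : rel 'I_n.+1 := fun u v => is_cell u v || is_cell v u.

Definition fdeg (v : 'I_n.+1) : nat := #|[set u | ferrers_adj u v]|.

(* configurations: the value at the sink 0 is irrelevant (kept at 0) *)
Definition config := 'I_n.+1 -> nat.

Definition topple_set (c : config) (A : {set 'I_n.+1}) : config :=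
  fun v => if v == ord0 then 0
           else c v - (v \in A) * fdeg v + #|[set u in A | ferrers_adj u v]|.

Definition unstable (c : config) (v : 'I_n.+1) : bool :=
  (v != ord0) && (fdeg v <= c v).

(* Steps 0,1,2,3,... correspond
   to the blocks U^(0), V^(1), U^(1), V^(2), ... *)
Fixpoint canon_step (c : config) (t : nat) : config * {set 'I_n.+1} :=
  match t with
  | 0 => (topple_set c [set ord0], [set ord0])
  | t'.+1 =>
      let c' := (canon_step c t').1 in
      let A := [set v | unstable c' v && ((v \in R) == ~~ odd t'.+1)] in
      (topple_set c' A, A)
  end.

(* index of the block of CanonTop(c) containing v (first step at which v
   topples; 2n+4 steps are more than enough) *)
Definition canon_block (c : config) (v : 'I_n.+1) : nat :=
  find (fun t => v \in (canon_step c t).2) (iota 0 (2 * n.+2)).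

(* 0/1 fillings: T i j = true means entry 1 (only cells are relevant) *)
Definition filling := 'I_n.+1 -> 'I_n.+1 -> bool.

Definition is_EWtab (T : filling) : Prop :=
  [/\ (forall j, is_cell ord0 j -> T ord0 j),
      (forall i, i \in R -> i != ord0 -> exists j, is_cell i j && ~~ T i j) &
      (forall i i' j j' : 'I_n.+1, i < i' -> j < j' ->
         is_cell i j -> is_cell i j' -> is_cell i' j -> is_cell i' j' ->
         ~ ([&& ~~ T i j, ~~ T i' j', T i j' & T i' j] ||
            [&& ~~ T i j', ~~ T i' j, T i j & T i' j']))].

Definition phiTC (T : filling) : config :=
  fun i => if i \in R then #|[set j | is_cell i j && T i j]|
           else #|[set j | is_cell j i && ~~ T j i]|.

(* supplementary tableau, indexed by labels (i a row label, j a column label) *)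
Definition supp_tab (T : filling) (i j : 'I_n.+1) : bool :=
  canon_block (phiTC T) i < canon_block (phiTC T) j.

End Ferrers.

(* Main.v *)
Require Import Defs.
From mathcomp Require Import all_boot.
From mathcomp Require Import zify.
Set Implicit Arguments. Unset Strict Implicit. Unset Printing Implicit Defensive.

Lemma card_split (X : finType) (P Q : pred X) :
  #|[set u | P u]| = #|[set u | P u && Q u]| + #|[set u | P u && ~~ Q u]|.
Proof.
rewrite -(cardsID [set u | Q u] [set u | P u]); congr (_ + _);
  by apply: eq_card => u; rewrite !inE // andbC.
Qed.

Section Proof.
Variable n : nat.
Variable R : {set 'I_n.+1}.
Variable T : 'I_n.+1 -> 'I_n.+1 -> bool.
Hypothesis R0 : ord0 \in R.
Hypothesis EW : is_EWtab R T.

Local Notation c := (phiTC R T).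
Local Notation adj := (ferrers_adj R).
Local Notation deg := (fdeg R).
Definition A t := (canon_step R c t).2.
Definition cf t := (canon_step R c t).1.
Definition D t := \bigcup_(s < t.+1) A s.
Definition nb t v := #|[set u in D t | adj u v]|.

Lemma degC k : k \notin R -> deg k = #|[set u | is_cell R u k]|.
Proof.
move=> kR; rewrite /fdeg; apply: eq_card => u; rewrite !inE /ferrers_adj.
by rewrite {2}/is_cell (negbTE kR) orbF.
Qed.

Lemma degR i : i \in R -> deg i = #|[set u | is_cell R i u]|.
Proof.
move=> iR; rewrite /fdeg; apply: eq_card => u; rewrite !inE /ferrers_adj.
by rewrite {1}/is_cell iR andbF.
Qed.

Lemma cC k : k \notin R -> c k = #|[set u | is_cell R u k && ~~ T u k]|.
Proof. by move=> kR; rewrite /phiTC (negbTE kR). Qed.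

Lemma cR i : i \in R -> c i = #|[set u | is_cell R i u && T i u]|.
Proof. by move=> iR; rewrite /phiTC iR. Qed.

Lemma c_lt_deg v : v != ord0 -> c v < deg v.
Proof.
move=> v0; case: (boolP (v \in R)) => vR.
  rewrite cR // degR //; apply: proper_card; apply/properP; split.
    by apply/subsetP => u; rewrite !inE => /andP[].
  case: EW => _ /(_ v vR v0) [k /andP[ck Tk]] _.
  by exists k; rewrite !inE ?ck // (negbTE Tk) andbF.
rewrite cC // degC //; apply: proper_card; apply/properP; split.
  by apply/subsetP => u; rewrite !inE => /andP[].
have c0 : is_cell R ord0 v.
  by rewrite /is_cell R0 vR /= lt0n.
case: EW => /(_ v c0) T0 _ _.
by exists ord0; rewrite !inE ?c0 // T0.
Qed.

Lemma nb_le_deg t v : nb t v <= deg v.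
Proof. by apply: subset_leq_card; apply/subsetP => u; rewrite !inE => /andP[]. Qed.

Lemma D0 : D 0 = [set ord0].
Proof. by apply/setP => v; rewrite /D big_ord1 inE. Qed.

Lemma DS t : D t.+1 = D t :|: A t.+1.
Proof. by rewrite /D big_ord_recr. Qed.

Lemma A0 : A 0 = [set ord0].
Proof. by []. Qed.

Lemma AS t : A t.+1 = [set v | unstable R (cf t) v && ((v \in R) == ~~ odd t.+1)].
Proof. by []. Qed.

Lemma cfS t : cf t.+1 = topple_set R (cf t) (A t.+1).
Proof. by []. Qed.

Lemma cf0 : cf 0 = topple_set R c [set ord0].
Proof. by []. Qed.

Lemma A_D s t v : s <= t -> v \in A s -> v \in D t.
Proof.
move=> st vA; apply/bigcupP; exists (Ordinal (st : s < t.+1)) => //.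
Qed.

Lemma D_A t v : v \in D t -> exists2 s, s <= t & v \in A s.
Proof. by move/bigcupP => [s _ vs]; exists s; rewrite // -ltnS. Qed.

Lemma D_mono s t v : s <= t -> v \in D s -> v \in D t.
Proof. by move=> st /D_A [s' s's vA]; apply: (A_D _ vA); apply: leq_trans st. Qed.

Lemma D_0 t : ord0 \in D t.
Proof. by apply: (A_D (s := 0)) => //; rewrite A0 set11. Qed.

Definition Inv t := forall v, v != ord0 ->
  (v \notin D t -> cf t v = c v + nb t v) /\ (v \in D t -> cf t v + deg v = c v + nb t v).

Lemma inv_stable t v : Inv t -> v \in D t -> ~~ unstable R (cf t) v.
Proof.
move=> It vD; rewrite /unstable negb_and; case: (eqVneq v ord0) => //= v0.
have [_ /(_ vD) E] := It v v0; have := c_lt_deg v0; have := nb_le_deg t v.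
rewrite -ltnNge; lia.
Qed.

Lemma Inv_all t : Inv t.
Proof.
elim: t => [|t IH] v v0.
  rewrite /nb D0 cf0 /topple_set (negbTE v0) inE (negbTE v0) /= subn0.
  by split.
have disj : forall u, u \in A t.+1 -> u \notin D t.
  move=> u; rewrite AS inE => /andP[un _]; apply/negP => uD.
  by move: (inv_stable IH uD); rewrite un.
have nbS : nb t.+1 v = nb t v + #|[set u in A t.+1 | adj u v]|.
  rewrite /nb DS; rewrite (_ : [set u in D t :|: A t.+1 | adj u v] =
     [set u in D t | adj u v] :|: [set u in A t.+1 | adj u v]); last first.
    by apply/setP => u; rewrite !inE andb_orl.
  rewrite cardsU (_ : _ :&: _ = set0) ?cards0 ?subn0 //.
  apply/setP => u; rewrite in_set0; apply/negP => /setIP[/setIdP[uD _] /setIdP[uA _]].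
  by move: (disj u uA); rewrite uD.
rewrite cfS /topple_set (negbTE v0) nbS DS inE.
have [_ /(_ v v0) [E1 E2]] := (IH, IH).
case: (boolP (v \in A t.+1)) => vA.
  have vD := disj v vA; rewrite orbT /=; split => // _.
  move: vA; rewrite AS inE => /andP[/andP[_ un] _].
  rewrite mul1n (E1 vD) in un *; lia.
rewrite orbF mul0n subn0; case: (boolP (v \in D t)) => vD.
  by split => // _; move: (E2 vD); lia.
by split => // _; rewrite (E1 vD); lia.
Qed.

Lemma acyclic (X : {set 'I_n.+1}) :
  (forall v, v \in X -> v \in R -> exists2 k, k \in X & is_cell R v k && ~~ T v k) ->
  (forall v, v \in X -> v \notin R -> exists2 i, i \in X & is_cell R i v && T i v) ->
  X = set0.
Proof.
have [m] := ubnP #|X|; elim: m X => // m IH X ltXm HR HC.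
case: (set_0Vmem X) => // [[x0 x0X]].
case: (arg_maxnP (fun v : 'I_n.+1 => nat_of_ord v) x0X) => k0 k0X k0max.
have k0R : k0 \notin R.
  apply/negP => k0R; have [k kX /andP[ck _]] := HR k0 k0X k0R.
  move: (k0max k kX); move: ck; rewrite /is_cell => /and3P[_ _ lt]; lia.
have [i iX /andP[ci Ti]] := HC k0 k0X k0R.
pose X' := [set v in X | if v \in R then T v k0 && is_cell R v k0
   else (v < k0) && [exists i0, [&& i0 \in X, i0 \in R, T i0 k0, is_cell R i0 k0,
                                  is_cell R i0 v & ~~ T i0 v]]].
have iR : i \in R by move: ci; rewrite /is_cell => /and3P[].
have iX' : i \in X' by rewrite inE iX iR Ti ci.
suff : X' = set0 by move/setP/(_ i); rewrite iX' inE.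
apply: IH.
- rewrite -ltnS; apply: leq_trans ltXm; rewrite ltnS; apply: proper_card.
  apply/properP; split; first by apply/subsetP => v; rewrite inE => /andP[].
  by exists k0 => //; rewrite inE (negbTE k0R) ltnn andbF.
- move=> r; rewrite inE => /andP[rX] + rR; rewrite rR => /andP[Trk0 crk0].
  have [k kX /andP[crk Trk]] := HR r rX rR.
  exists k; last by rewrite crk Trk.
  rewrite inE kX /=.
  have kR : k \notin R by move: crk; rewrite /is_cell => /and3P[].
  rewrite (negbTE kR); apply/andP; split.
    have kk0 : k <= k0 := k0max k kX.
    rewrite ltn_neqAle kk0 andbT; apply/eqP => /val_inj ek.
    by move: Trk; rewrite ek Trk0.
  by apply/existsP; exists r; rewrite rX rR Trk0 crk0 crk Trk.
- move=> v; rewrite inE => /andP[vX] + vR; rewrite (negbTE vR).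
  move=> /andP[vk0 /existsP[i0 /and5P[i0X i0R Ti0k0 ci0k0 /andP[ci0v Ti0v]]]].
  have [i1 i1X /andP[ci1v Ti1v]] := HC v vX vR.
  exists i1; last by rewrite ci1v Ti1v.
  rewrite inE i1X /=.
  have i1R : i1 \in R by move: ci1v; rewrite /is_cell => /and3P[].
  have ci1k0 : is_cell R i1 k0.
    rewrite /is_cell i1R k0R /=; apply: leq_trans vk0; apply: ltnW.
    by move: ci1v => /and3P[].
  rewrite i1R ci1k0 andbT; apply/negPn/negP => Ti1k0.
  have ne : i0 != i1 by apply/eqP => e; move: Ti0v; rewrite e Ti1v.
  case: EW => _ _ rect.
  have cvk0 : is_cell R i0 v by [].
  case: (ltngtP i0 i1) => [lt|lt|/val_inj e]; last by rewrite e eqxx in ne.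
  + apply: (rect i0 i1 v k0 lt vk0 ci0v ci0k0 ci1v ci1k0).
    by rewrite Ti0v Ti1k0 Ti0k0 Ti1v.
  + apply: (rect i1 i0 v k0 lt vk0 ci1v ci1k0 ci0v ci0k0).
    by rewrite Ti0v Ti1k0 Ti0k0 Ti1v orbT.
Qed.

Lemma witness_col t k : k \notin R -> c k + nb t k < deg k ->
  exists i, [&& is_cell R i k, T i k & i \notin D t].
Proof.
move=> kR lt.
case: (boolP [exists i, [&& is_cell R i k, T i k & i \notin D t]]) =>
   [/existsP[i H]|/existsPn H]; first by exists i.
have sub : [set u | is_cell R u k] \subset
   [set u | is_cell R u k && ~~ T u k] :|: [set u in D t | adj u k].
  apply/subsetP => u; rewrite !inE => cu; rewrite cu /=.
  case: (boolP (T u k)) => Tu //=.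
  move: (H u); rewrite cu Tu /= negbK => ->.
  by rewrite /ferrers_adj cu.
move: (subset_leq_card sub); rewrite cardsU -degC // -cC //.
rewrite -/(nb t k); lia.
Qed.

Lemma witness_row t i : i \in R -> c i + nb t i < deg i ->
  exists k, [&& is_cell R i k, ~~ T i k & k \notin D t].
Proof.
move=> iR lt.
case: (boolP [exists k, [&& is_cell R i k, ~~ T i k & k \notin D t]]) =>
   [/existsP[k H]|/existsPn H]; first by exists k.
have sub : [set u | is_cell R i u] \subset
   [set u | is_cell R i u && T i u] :|: [set u in D t | adj u i].
  apply/subsetP => u; rewrite !inE => cu; rewrite cu /=.
  case: (boolP (T i u)) => Tu //=.
  move: (H u); rewrite cu Tu /= negbK => ->.
  by rewrite /ferrers_adj cu orbT.
move: (subset_leq_card sub); rewrite cardsU -degR // -cR //.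
rewrite -/(nb t i); lia.
Qed.

Lemma stuck s v : v != ord0 -> v \notin A s.+1 -> v \notin D s ->
  (v \in R) == ~~ odd s.+1 -> c v + nb s v < deg v.
Proof.
move=> v0 vA vD par.
have [E _] := Inv_all s v0; rewrite -(E vD).
move: vA; rewrite AS inE par andbT /unstable v0 /= -ltnNge; done.
Qed.

Lemma stall t : D t.+2 \subset D t -> D t = setT.
Proof.
move=> sub.
have key : forall v, v \notin D t -> c v + nb (if (~~ odd t.+1) == (v \in R) then t else t.+1) v < deg v /\
   (v \notin D (if (~~ odd t.+1) == (v \in R) then t else t.+1)) /\
   D t \subset D (if (~~ odd t.+1) == (v \in R) then t else t.+1).
  move=> v vD.
  set s := (if _ then _ else _).
  have ts : t <= s by rewrite /s; case: ifP.
  have st : s.+1 <= t.+2 by rewrite /s; case: ifP.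
  have vDs : v \notin D s.
    apply/negP => /(D_mono (ltnW st)) vD2; move/subsetP: sub => /(_ v vD2).
    by rewrite (negbTE vD).
  have v0 : v != ord0 by apply/eqP => e; move: vD; rewrite e D_0.
  split; last split => //; last by apply/subsetP => u; apply: D_mono.
  apply: stuck => //.
    apply/negP => /(A_D st) vD2; move/subsetP: sub => /(_ v vD2).
    by rewrite (negbTE vD).
  rewrite /s /= negbK; case: (v \in R); case: (boolP (odd t)) => o /=; rewrite ?o //= ?negbK ?o.
have X0 : ~: D t = set0.
  apply: acyclic.
    move=> v; rewrite inE => vD vR.
    have [lt [vDs sub']] := key v vD.
    have [k /and3P[ck Tk kD]] := witness_row vR lt.
    exists k; last by rewrite ck Tk.
    by rewrite inE; apply: contra kD; apply/subsetP.
  move=> v; rewrite inE => vD vR.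
  have [lt [vDs sub']] := key v vD.
  have [i /and3P[ci Ti iD]] := witness_col vR lt.
  exists i; last by rewrite ci Ti.
  by rewrite inE; apply: contra iD; apply/subsetP.
apply/setP => v; rewrite inE; apply/negPn/negP => vD.
by move: (in_setC v (D t)); rewrite X0 in_set0 vD.
Qed.

Lemma growth m : D (2 * m) = setT \/ m < #|D (2 * m)|.
Proof.
elim: m => [|m [IH|IH]]; first by right; rewrite muln0 D0 cards1.
  left; apply/setP => v; rewrite inE.
  by apply: (D_mono (s := 2 * m)); rewrite ?IH ?inE //; lia.
have e : 2 * m.+1 = (2 * m).+2 by lia.
rewrite e; case: (boolP (D (2 * m).+2 \subset D (2 * m))) => [/stall Hs|ns].
  left; apply/setP => v; rewrite inE; apply: (D_mono (s := 2 * m)); first by lia.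
  by rewrite Hs inE.
right; apply: leq_ltn_trans IH _; apply: proper_card; apply/properP; split.
  by apply/subsetP => v vD; apply: (D_mono _ vD); lia.
by case/subsetPn: ns => v vD vD'; exists v.
Qed.

Lemma all_D v : v \in D (2 * n).
Proof.
case: (growth n) => [->|lt]; first by rewrite inE.
apply/negPn/negP => vD.
have : D (2 * n) \subset [set~ v].
  by apply/subsetP => u uD; rewrite !inE; apply: contra vD => /eqP <-.
move/subset_leq_card; rewrite cardsC1 card_ord /= => h; by move: (leq_ltn_trans h lt); rewrite ltnn.
Qed.

Definition tau v := canon_block R c v.
Definition N := 2 * n.+2.

Lemma D_tau t v : v \in D t -> t < N -> tau v <= t.
Proof.
move=> /D_A [s st vA] tN; rewrite /tau /canon_block.
rewrite leqNgt; apply/negP => lt.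
have sf : s < find (fun t0 => v \in (canon_step R c t0).2) (iota 0 (2 * n.+2)).
  by apply: leq_ltn_trans lt.
have := before_find 0 sf; rewrite nth_iota; last by apply: leq_ltn_trans tN.
by rewrite add0n => /negbT/negP; apply.
Qed.

Lemma tau_lt v : tau v < N.
Proof.
by apply: leq_ltn_trans (D_tau (all_D v) _) _; rewrite /N; lia.
Qed.

Lemma tau_A v : v \in A (tau v).
Proof.
have h := tau_lt v.
have hs : has (fun t0 => v \in (canon_step R c t0).2) (iota 0 (2 * n.+2)).
  by rewrite has_find size_iota; exact h.
by have := nth_find 0 hs; rewrite nth_iota // add0n.
Qed.

Lemma A_notD s v : v \in A s.+1 -> v \notin D s.
Proof.
rewrite AS inE => /andP[un _]; apply/negP => vD.
by move: (inv_stable (Inv_all s) vD); rewrite un.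
Qed.

Lemma notD_tau t v : v \notin D t -> t < tau v.
Proof.
move=> vD; rewrite ltnNge; apply/negP => le.
by move: vD; rewrite (A_D le (tau_A v)).
Qed.

Lemma A_tau s v : v \in A s -> tau v <= s.
Proof.
move=> vA; have [sN|Ns] := ltnP s N; first exact: D_tau (A_D (leqnn s) vA) sN.
exact: leq_trans (ltnW (tau_lt v)) Ns.
Qed.

Lemma A_par s v : v \in A s -> (v \in R) = ~~ odd s.
Proof.
case: s => [|s]; first by rewrite A0 inE => /eqP ->.
by rewrite AS inE => /andP[_ /eqP].
Qed.

Lemma tau_par v : (v \in R) = ~~ odd (tau v).
Proof. exact: A_par (tau_A v). Qed.

Lemma J s :
  (forall k i, k \in A s -> is_cell R i k -> T i k -> exists2 s', s' < s & i \in A s') /\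
  (forall i k, i \in A s -> is_cell R i k -> ~~ T i k -> exists2 s', s' < s & k \in A s').
Proof.
elim/ltn_ind: s => s IH; split.
  move=> k i kA cik Tik.
  have kR : k \notin R by move: cik => /and3P[].
  case: s IH kA => [|s] IH kA.
    by move: kA; rewrite A0 inE => /eqP e; move: kR; rewrite e R0.
  have kD := A_notD kA.
  have k0 : k != ord0 by apply/eqP => e; move: kR; rewrite e R0.
  have [E _] := Inv_all s k0.
  move: (kA); rewrite AS inE => /andP[/andP[_ un] _]; rewrite (E kD) in un.
  have sub : [set u in D s | adj u k] \subset [set u | is_cell R u k && T u k].
    apply/subsetP => u; rewrite !inE => /andP[uD].
    rewrite /ferrers_adj {2}/is_cell (negbTE kR) orbF => cuk; rewrite cuk /=.
    apply/negPn/negP => Tuk.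
    have [s'' s''s uA] := D_A uD.
    have [_ H] := IH s'' (leq_ltn_trans s''s (ltnSn s)).
    have [s3 s3s kA3] := H u k uA cuk Tuk.
    by move: kD; rewrite (A_D (ltnW (leq_trans s3s s''s)) kA3).
  have eqs : [set u in D s | adj u k] == [set u | is_cell R u k && T u k].
    rewrite eqEcard sub /=.
    move: un; rewrite degC // (card_split _ (fun u => T u k)) cC // -/(nb s k).
    by rewrite addnC leq_add2l.
  have : i \in [set u in D s | adj u k] by rewrite (eqP eqs) inE cik Tik.
  rewrite inE => /andP[/D_A [s' s's iA] _].
  by exists s'.
move=> i k iA cik Tik.
have iR : i \in R by move: cik => /and3P[].
case: s IH iA => [|s] IH iA.
  move: iA; rewrite A0 inE => /eqP e; move: cik Tik; rewrite e => cik.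
  by case: EW => /(_ k cik) -> _ _.
have iD := A_notD iA.
have i0 : i != ord0.
  apply/eqP => e; move: cik Tik; rewrite e => cik.
  by case: EW => /(_ k cik) -> _ _.
have [E _] := Inv_all s i0.
move: (iA); rewrite AS inE => /andP[/andP[_ un] _]; rewrite (E iD) in un.
have sub : [set u in D s | adj u i] \subset [set u | is_cell R i u && ~~ T i u].
  apply/subsetP => u; rewrite !inE => /andP[uD].
  rewrite /ferrers_adj {1}/is_cell iR andbF /= => ciu; rewrite ciu /=.
  apply/negP => Tiu.
  have [s'' s''s uA] := D_A uD.
  have [H _] := IH s'' (leq_ltn_trans s''s (ltnSn s)).
  have [s3 s3s iA3] := H u i uA ciu Tiu.
  by move: iD; rewrite (A_D (ltnW (leq_trans s3s s''s)) iA3).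
have eqs : [set u in D s | adj u i] == [set u | is_cell R i u && ~~ T i u].
  rewrite eqEcard sub /=.
  move: un; rewrite degR // (card_split _ (fun u => T i u)) cR // -/(nb s i).
  by rewrite leq_add2l.
have : k \in [set u in D s | adj u i] by rewrite (eqP eqs) inE cik Tik.
rewrite inE => /andP[/D_A [s' s's kA] _].
by exists s'.
Qed.

Lemma P2a i k : is_cell R i k -> T i k -> tau i < tau k.
Proof.
move=> cik Tik; have [H _] := J (tau k).
have [s' lt iA] := H k i (tau_A k) cik Tik.
exact: leq_ltn_trans (A_tau iA) lt.
Qed.

Lemma P2b i k : is_cell R i k -> ~~ T i k -> tau k < tau i.
Proof.
move=> cik Tik; have [_ H] := J (tau i).
have [s' lt kA] := H i k (tau_A i) cik Tik.
exact: leq_ltn_trans (A_tau kA) lt.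
Qed.

Lemma P3 k : k \notin R -> exists i, [&& is_cell R i k, T i k & tau k <= tau i + 2].
Proof.
move=> kR.
have k0 : k != ord0 by apply/eqP => e; move: kR; rewrite e R0.
case: (leqP (tau k) 2) => h.
  have c0 : is_cell R ord0 k by rewrite /is_cell R0 kR /= lt0n.
  exists ord0; rewrite c0 /=; case: EW => /(_ k c0) -> _ _ /=.
  exact: leq_trans h (leq_addl _ _).
pose s' := tau k - 3.
have e : tau k = s'.+3 by rewrite /s'; lia.
have kA : k \notin A s'.+1.
  by apply/negP => /A_tau; rewrite e; lia.
have kD : k \notin D s'.
  by apply/negP => /(D_tau) H; have := H (leq_ltn_trans (leq_subr _ _) (tau_lt k)); lia.
have par : (k \in R) == ~~ odd s'.+1 by rewrite tau_par e /= negbK.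
have [i /and3P[ci Ti iD]] := witness_col kR (stuck k0 kA kD par).
exists i; rewrite ci Ti /=; have := notD_tau iD; lia.
Qed.

Lemma P4 j : j \in R -> j != ord0 ->
  exists k, [&& is_cell R j k, ~~ T j k & tau j <= tau k + 2].
Proof.
move=> jR j0.
case: (leqP (tau j) 2) => h.
  case: EW => _ /(_ j jR j0) [k /andP[ck Tk]] _.
  exists k; rewrite ck Tk /=; exact: leq_trans h (leq_addl _ _).
pose s' := tau j - 3.
have e : tau j = s'.+3 by rewrite /s'; lia.
have jA : j \notin A s'.+1.
  by apply/negP => /A_tau; rewrite e; lia.
have jD : j \notin D s'.
  by apply/negP => /(D_tau) H; have := H (leq_ltn_trans (leq_subr _ _) (tau_lt j)); lia.
have par : (j \in R) == ~~ odd s'.+1 by rewrite tau_par e /= negbK.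
have [k /and3P[ck Tk kD]] := witness_row jR (stuck j0 jA jD par).
exists k; rewrite ck Tk /=; have := notD_tau kD; lia.
Qed.

Lemma main (j k : 'I_n.+1) :
  j \in R -> k \notin R -> k < j ->
  (supp_tab R T j k = false <->
   exists k' : 'I_n.+1,
     [/\ k' \notin R, j < k', T j k' = false &
         forall j' : 'I_n.+1, j' \in R -> j' < k -> T j' k' = false -> T j' k = false]).
Proof.
move=> jR kR kj.
rewrite /supp_tab -/(tau j) -/(tau k).
split.
  move=> /negbT; rewrite -leqNgt => le.
  have ne : tau k != tau j.
    apply/eqP => e; move: (tau_par j) (tau_par k); rewrite e jR (negbTE kR).
    by move=> <-.
  have lt : tau k < tau j by rewrite ltn_neqAle ne le.
  have j0 : j != ord0 by apply/eqP => e; move: kj; rewrite e.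
  have [k' /and3P[cjk' Tjk' h]] := P4 jR j0.
  have k'R : k' \notin R by move: cjk' => /and3P[].
  have kk' : tau k <= tau k'.
    have ne2 : tau k != (tau k').+1.
      apply/eqP => e; move: (tau_par k) (tau_par k'); rewrite e (negbTE kR) (negbTE k'R) /=.
      by case: (odd (tau k')).
    move: ne2 h lt; lia.
  exists k'; split => //; first by move: cjk' => /and3P[].
    exact: negbTE.
  move=> j' j'R j'k Tj'k'.
  have cj'k' : is_cell R j' k'.
    move: cjk' => /and3P[_ _ jk']; rewrite /is_cell j'R k'R /=; lia.
  have h1 := P2b cj'k' (negbT Tj'k').
  apply/negP => Tj'k.
  have cj'k : is_cell R j' k by rewrite /is_cell j'R kR.
  have := P2a cj'k Tj'k; lia.
move=> [k' [k'R jk' Tjk' Hall]].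
apply/negP => lt.
have [i /and3P[cik Tik h]] := P3 kR.
have iR : i \in R by move: cik => /and3P[].
have ik : i < k by move: cik => /and3P[].
have Tik' : T i k'.
  apply/negPn/negP => /negbTE H; by rewrite (Hall i iR ik H) in Tik.
have cik' : is_cell R i k' by rewrite /is_cell iR k'R /=; lia.
have cjk' : is_cell R j k' by rewrite /is_cell jR k'R /=.
have := P2a cik' Tik'; have := P2b cjk' (negbT Tjk'); lia.
Qed.

End Proof.

Theorem proposition4p15 (n : nat) (R : {set 'I_n.+1}) (T : 'I_n.+1 -> 'I_n.+1 -> bool)
    (j k : 'I_n.+1) :
  ord0 \in R -> ord_max \notin R ->
  is_EWtab R T ->
  j \in R -> k \notin R -> k < j ->
  (supp_tab R T j k = false <->
   exists k' : 'I_n.+1,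
     [/\ k' \notin R, j < k', T j k' = false &
         forall j' : 'I_n.+1, j' \in R -> j' < k -> T j' k' = false -> T j' k = false]).
Proof.
move=> R0 _ EW; exact: main.
Qed.
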